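(* Let $(N,+,* )$ be a planar nearring with $D(N)\ne\{0\}$. Then the set $K$ of zero multipliers of $N$ is an ideal of $N$.
   Context: A (right) nearring $(N,+,* )$ is a set with a group $(N,+)$, a semigroup $(N,* )$, and right distributivity $(a+b)*c=a*c+b*c$. $N$ is planar if the relation $a\cong b$ ($x*a=x*b$ for all $x$) has at least $3$ classes and for all $a,b,c$ with $a\not\cong b$ the equation $x*a=x*b+c$ has a unique solution. The zero multipliers are the $n\in N$ with $x*n=0$ for all $x\in N$. $D(N)=\{n: n*(a+b)=n*a+n*b\ \forall a,b\}$. A subset $I$ is an ideal if it is a normal subgroup of $(N,+)$ with $i*n\in I$ for all $i\in I,n\in N$ (right ideal), and $n*m-n*(m+i)\in I$ for all $n,m\in N$, $i\in I$ (left ideal). *)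

(* Defs.v *)
Record is_nearring {N : Type} (add : N -> N -> N) (opp : N -> N) (zero : N)
    (mul : N -> N -> N) : Prop := {
  nr_addA : forall a b c, add a (add b c) = add (add a b) c;
  nr_add0l : forall a, add zero a = a;
  nr_add0r : forall a, add a zero = a;
  nr_addNl : forall a, add (opp a) a = zero;
  nr_addNr : forall a, add a (opp a) = zero;
  nr_mulA : forall a b c, mul a (mul b c) = mul (mul a b) c;
  nr_mulDr : forall a b c, mul (add a b) c = add (mul a c) (mul b c)
}.

Definition nr_equiv {N : Type} (mul : N -> N -> N) (a b : N) : Prop :=
  forall x, mul x a = mul x b.

Definition is_planar {N : Type} (add : N -> N -> N) (mul : N -> N -> N) : Prop :=
  (exists a b c : N, ~ nr_equiv mul a b /\ ~ nr_equiv mul a c /\ ~ nr_equiv mul b c) /\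
  (forall a b c : N, ~ nr_equiv mul a b ->
     exists! x : N, mul x a = add (mul x b) c).

Definition zero_multiplier {N : Type} (zero : N) (mul : N -> N -> N) (n : N) : Prop :=
  forall x, mul x n = zero.

Definition distributive_elt {N : Type} (add : N -> N -> N) (mul : N -> N -> N) (n : N) : Prop :=
  forall a b, mul n (add a b) = add (mul n a) (mul n b).

Definition is_nr_ideal {N : Type} (add : N -> N -> N) (opp : N -> N) (zero : N)
    (mul : N -> N -> N) (I : N -> Prop) : Prop :=
  I zero /\
  (forall i j, I i -> I j -> I (add i j)) /\
  (forall i, I i -> I (opp i)) /\
  (forall n i, I i -> I (add (add n i) (opp n))) /\
  (forall i n, I i -> I (mul i n)) /\
  (* left ideal *)
  (forall n m i, I i -> I (add (mul n m) (opp (mul n (add m i))))).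

(* Main.v *)
Require Import Defs.
From Stdlib Require Import Classical.

Theorem mainTheorem5 (N : Type) (add : N -> N -> N) (opp : N -> N) (zero : N)
    (mul : N -> N -> N)
    (HN : is_nearring add opp zero mul)
    (Hplanar : is_planar add mul)
    (HD : exists d : N, distributive_elt add mul d /\ d <> zero) :
  is_nr_ideal add opp zero mul (zero_multiplier zero mul).
Proof.
  destruct HN as [addA add0l add0r addNl addNr mulA mulDr].
  destruct Hplanar as [[a [b [c [Hab [Hac Hbc]]]]] Hsol].
  destruct HD as [d [Hd Hd0]].
  assert (idem : forall u, u = add u u -> u = zero).
  { intros u H. transitivity (add (opp u) (add u u)).
    - rewrite addA, addNl, add0l. reflexivity.
    - rewrite <- H. apply addNl. }
  assert (inv : forall u v, add u v = zero -> v = opp u).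
  { intros u v H. rewrite <- (add0l v), <- (addNl u), <- addA, H, add0r. reflexivity. }
  assert (m0l : forall x, mul zero x = zero).
  { intros x. apply idem. rewrite <- mulDr, add0l. reflexivity. }
  assert (uniq : forall p q, ~ nr_equiv mul p q -> forall c y z,
     mul y p = add (mul y q) c -> mul z p = add (mul z q) c -> y = z).
  { intros p q H c0 y z Hy Hz. destruct (Hsol p q c0 H) as [w [_ Hw]].
    rewrite <- (Hw y Hy). apply Hw; exact Hz. }
  assert (Hne : exists e, ~ nr_equiv mul e zero).
  { destruct (classic (nr_equiv mul a zero)) as [Ha|Ha]; [|eauto].
    exists b. intros Hb. apply Hab. intro x. rewrite Ha, Hb. reflexivity. }
  assert (m0r : forall x, mul x zero = zero).
  { destruct Hne as [e He]. intros x.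
    apply (uniq e zero He zero).
    - rewrite <- mulA, m0l, <- mulA, m0l, add0r. reflexivity.
    - rewrite m0l, m0l, add0r. reflexivity. }
  assert (dN : forall u, mul d (opp u) = opp (mul d u)).
  { intros u. apply inv. rewrite <- Hd, addNr, m0r. reflexivity. }
  assert (key : forall k, mul d k = zero -> zero_multiplier zero mul k).
  { intros k Hk x. destruct (classic (nr_equiv mul k zero)) as [H|H].
    - rewrite H, m0r. reflexivity.
    - exfalso. apply Hd0. apply (uniq k zero H zero).
      + rewrite m0r, Hk, add0r. reflexivity.
      + rewrite m0l, m0l, add0r. reflexivity. }
  assert (shift : forall m i, zero_multiplier zero mul i -> nr_equiv mul (add m i) m).
  { intros m i Hi. apply NNPP. intro H. apply Hd0.
    apply (uniq _ _ H zero).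
    - rewrite Hd, Hi, !add0r. reflexivity.
    - rewrite m0l, m0l, add0r. reflexivity. }
  unfold is_nr_ideal. split; [|split; [|split; [|split; [|split]]]].
  - intro x. apply m0r.
  - intros i j Hi Hj. apply key. rewrite Hd, Hi, Hj, add0r. reflexivity.
  - intros i Hi. apply key. rewrite dN, Hi. symmetry. apply inv. apply add0r.
  - intros n i Hi. apply key. rewrite Hd, Hd, dN, Hi, add0r, addNr. reflexivity.
  - intros i n Hi x. rewrite mulA, Hi, m0l. reflexivity.
  - intros n m i Hi. rewrite (shift m i Hi n), addNr. intro x. apply m0r.
Qed.
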